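(* The Max-Egal objective is weak-proof against a manipulator $m^+$ (one who can only add edges) over undirected networks. That is, for every $k$, every undirected social network $G$, every agent $m$ and every manipulation in which $m$ adds edges incident to $m$ (yielding $G^m$), it is not the case that both \[\min_{P\in O(G^m)} u(m,P)>\min_{P\in O(G)} u(m,P)\quad\text{and}\quad \max_{P\in O(G^m)} u(m,P)>\max_{P\in O(G)} u(m,P),\] where $O(\cdot)$ denotes the set of Max-Egal solutions and $u(m,P)$ is computed in the true network $G$.
   Context: Let $A=\{a_1,\dots,a_n\}$ be a finite nonempty set of agents and $G=\langle A,E\rangle$ an undirected graph without self-loops (the social network). $N(a)$ is the set of neighbours of $a$ in $G$. For a coalition $C\subseteq A$ with $a\in C$, $u(a,C)=|C\cap N(a)|$. For $0<k\le n$, $\Pi_k$ is the set of partitions of $A$ into exactly $k$ nonempty coalitions; for $P\in\Pi_k$, $u(a,P)=u(a,C)$ where $C\in P$ contains $a$. The Max-Egal objective: $O(G)$ is the set of $P\in\Pi_k$ maximizing $\min_{a\in A}u(a,P)$ (utilities computed in the network in question). A manipulator $m$ of type $m^+$ in an undirected network may add any set of new edges $\{m,a\}$ (non-edges of $G$); the resulting reported network is $G^m$. The utility $u(m,P)$ of the manipulator is always computed with respect to his true neighbours in the original $G$. *)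

(* Defs.v *)
From mathcomp Require Import all_boot.
Set Implicit Arguments. Unset Strict Implicit. Unset Printing Implicit Defensive.

Section Defs.
Variable T : finType.

Definition undirected (e : rel T) : Prop :=
  (forall a b, e a b = e b a) /\ (forall a, ~~ e a a).

Definition nbhd (e : rel T) (a : T) : {set T} := [set b | e a b].

(* Pi_k : partitions of A into exactly k nonempty coalitions
   (finset's [partition] already requires set0 \notin P). *)
Definition Pi (k : nat) : {set {set {set T}}} :=
  [set P : {set {set T}} | partition P [set: T] && (#|P| == k)].

Definition util (e : rel T) (a : T) (P : {set {set T}}) : nat :=
  #|pblock P a :&: nbhd e a|.

(* min_a u(a,P); #|T| is a neutral upper bound since utilities are < #|T|. *)
Definition egal (e : rel T) (P : {set {set T}}) : nat :=
  \big[minn/#|T|]_(a : T) util e a P.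

Definition MaxEgal (e : rel T) (k : nat) : {set {set {set T}}} :=
  [set P in Pi k | [forall Q in Pi k, egal e Q <= egal e P]].

(* min / max over a (nonempty) set of partitions of the true utility of m;
   #|T| is a neutral upper bound for minn since utilities are < #|T|. *)
Definition minU (e : rel T) (m : T) (S : {set {set {set T}}}) : nat :=
  \big[minn/#|T|]_(P in S) util e m P.
Definition maxU (e : rel T) (m : T) (S : {set {set {set T}}}) : nat :=
  \max_(P in S) util e m P.

Definition plus_manip (e em : rel T) (m : T) : Prop :=
  undirected em /\ (forall a b, e a b -> em a b) /\
  (forall a b, em a b -> e a b || (a == m) || (b == m)).
End Defs.

(* Main.v *)
Require Import Defs.
From mathcomp Require Import all_boot zify.

Section S.
Variable T : finType.
Implicit Types (e em : rel T) (P : {set {set T}}).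

Lemma egal_le e P a : egal e P <= util e a P.
Proof.
rewrite /egal unlock; have : a \in index_enum T by rewrite mem_index_enum.
elim: (index_enum T) => //= b r IH; rewrite inE => /orP [/eqP->|/IH H].
  exact: geq_minl.
by rewrite geq_min H orbT.
Qed.

Lemma egal_le_card e P : egal e P <= #|T|.
Proof.
rewrite /egal; elim/big_ind: _ => //; last by move=> a _; exact: max_card.
by move=> x y Hx _; rewrite geq_min Hx.
Qed.

Lemma egal_ge e P x : x <= #|T| -> (forall a, x <= util e a P) -> x <= egal e P.
Proof.
move=> Hx H; rewrite /egal; elim/big_ind: _ => // y z Hy Hz.
by rewrite leq_min Hy Hz.
Qed.

Lemma util_mono e em P a : (forall a b, e a b -> em a b) -> util e a P <= util em a P.
Proof.
move=> H; apply: subset_leq_card; apply/subsetP=> x; rewrite !inE.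
by case/andP=> -> /H.
Qed.

Lemma egal_mono e em P : (forall a b, e a b -> em a b) -> egal e P <= egal em P.
Proof.
move=> H; apply: egal_ge; first exact: egal_le_card.
by move=> a; apply: leq_trans (egal_le e P a) (util_mono e em P a H).
Qed.

Lemma util_fake e em m P a : a != m ->
  (forall a b, em a b -> e a b || (a == m) || (b == m)) ->
  util em a P <= (util e a P).+1.
Proof.
move=> Ham H; rewrite /util.
apply: leq_trans (_ : #|m |: (pblock P a :&: nbhd e a)| <= _); last first.
  by rewrite cardsU1; case: (m \in _).
apply: subset_leq_card; apply/subsetP=> x; rewrite !inE.
case/andP=> -> /H; rewrite (negbTE Ham) orbF /=.
by case/orP=> ->; rewrite ?orbT.
Qed.

End S.

Theorem theorem1 (T : finType) (k : nat) (e em : rel T) (m : T) :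
  0 < k <= #|T| ->
  undirected e ->
  plus_manip e em m ->
  ~ ( minU e m (MaxEgal em k) > minU e m (MaxEgal e k) /\
      maxU e m (MaxEgal em k) > maxU e m (MaxEgal e k) ).
Proof.
move=> _ _ [_ [Hsub Hfake]] [H1 H2].
have [P' P'O HP'] : exists2 P', P' \in MaxEgal em k & maxU e m (MaxEgal e k) < util e m P'.
  move: H2; rewrite /maxU; case: (pickP (mem (MaxEgal em k))) => [P0 HP0|H0].
    rewrite (bigmax_eq_arg _ HP0); set P := [arg max_(_ > _ in _) _] => HP.
    exists P => //; rewrite /P; case: arg_maxnP => //.
  by rewrite [X in _ < X]big_pred0.
move: (P'O); rewrite inE => /andP [P'Pi P'opt].
pose P0 := [arg max_(P > P' in Pi T k) egal e P].
have P0O : P0 \in MaxEgal e k.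
  rewrite /P0; case: arg_maxnP => // P HP Hmax.
  by rewrite inE HP; apply/forall_inP.
move: (P0O); rewrite inE => /andP [P0Pi P0opt].
have optE Q : Q \in Pi T k -> egal e Q <= egal e P0 by move=> HQ; exact: (forall_inP P0opt).
have optEm Q : Q \in Pi T k -> egal em Q <= egal em P' by move=> HQ; exact: (forall_inP P'opt).
have le_maxO P : P \in MaxEgal e k -> util e m P <= maxU e m (MaxEgal e k).
  by move=> HP; rewrite /maxU (bigmax_sup P).
case: (leqP (egal em P') (egal e P0)) => Hv.
- (* O(G) subset O(G^m): minO' <= minO *)
  have sub P : P \in MaxEgal e k -> P \in MaxEgal em k.
    rewrite !inE => /andP [HP Hopt]; rewrite HP /=; apply/forall_inP=> Q HQ.
    apply: leq_trans (optEm Q HQ) _; apply: leq_trans Hv _.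
    have X1 := forall_inP Hopt _ P0Pi. have X2 := egal_mono _ e em P Hsub. exact: leq_trans X1 X2.
  move: H1; apply/negP; rewrite -leqNgt.
  have lo : minU e m (MaxEgal em k) <= #|T|.
    rewrite /minU; elim/big_ind: _ => //; last by move=> ? _; exact: max_card.
    by move=> x y Hx _; rewrite geq_min Hx.
  rewrite {2}/minU; elim/big_ind: _ => //; first by move=> x y Hx Hy; rewrite leq_min Hx Hy.
  move=> P /sub HP; rewrite /minU unlock.
  have : P \in index_enum _ by rewrite mem_index_enum.
  elim: (index_enum _) => //= b r IH; rewrite inE => /orP [/eqP<-|/IH H].
    by rewrite HP geq_minl.
  by case: (b \in _); rewrite // geq_min H orbT.
- case: (leqP (egal e P0) (util e m P')) => Hm.
  + have : P' \in MaxEgal e k.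
      rewrite inE P'Pi /=; apply/forall_inP=> Q HQ; apply: leq_trans (optE Q HQ) _.
      apply: egal_ge; first exact: egal_le_card.
      move=> a; case: (eqVneq a m) => [->//|Ham].
      have := util_fake _ e em m P' a Ham Hfake; have := egal_le _ em P' a.
      move: Hv; clear; lia.
    by move/le_maxO; rewrite leqNgt HP'.
  + have := le_maxO P0 P0O; have := egal_le _ e P0 m.
    move: Hm HP'; clear; lia.
Qed.
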